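(* Let $n\geq2$ and $\sigma>0$. For $b>0$ let $C^1_0([b,\infty))$ be the Banach space of $C^1$ functions $v:[b,\infty)\to\mathbb{R}$ with $v(x)\to0$ and $v'(x)\to0$ as $x\to+\infty$, with norm $\|v\|_{C^1}=\sup_{[b,\infty)}|v|+\sup_{[b,\infty)}|v'|$, and let $$Y_{\sigma,b}=\Big\{v\in C^1_0([b,\infty)) : v(x)>0,\ |v'(x)|<\frac{4(n-1)}{\sigma x^2}\ \text{for all }x\geq b\Big\}.$$ Define for $v\in Y_{\sigma,b}$ and $x\geq b$ $$[T_\sigma v](x)=2(n-1)x\int_x^\infty\frac{1}{t^2}\bigg\{\int_t^\infty\frac{1+(v'(s)+\sigma)^2}{v(s)+\sigma s}\,\frac{s}{2}\,e^{-\int_t^s\frac{z}{2}(1+(v'(z)+\sigma)^2)\,dz}\,ds\bigg\}dt.$$ Then there exists $b_0=b_0(n,\sigma)$ such that for every $b\geq b_0$, $T_\sigma$ is a contraction on $Y_{\sigma,b}$ for the norm $\|\cdot\|_{C^1}$, i.e. there is $\tau\in(0,1)$ with $\|T_\sigma v_2-T_\sigma v_1\|_{C^1}\leq\tau\|v_2-v_1\|_{C^1}$ for all $v_1,v_2\in Y_{\sigma,b}$. *)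

(* Defs.v *)
From Stdlib Require Import Reals.
From Coquelicot Require Import Coquelicot.
Open Scope R_scope.

(* v is C^1 on [b, +oo).  Functions are R -> R; only their restriction to
   [b,+oo) matters.  We ask for (two-sided) differentiability at every
   x >= b with Derive v continuous at every x >= b; every C^1 function on
   the closed half-line is the restriction of such a function (C^1
   extension to the left of b), so this is the same class of restrictions. *)
Definition C1_on (b : R) (v : R -> R) : Prop :=
  (forall x, b <= x -> ex_derive v x) /\
  (forall x, b <= x -> continuous (Derive v) x).

Definition C10 (b : R) (v : R -> R) : Prop :=
  C1_on b v /\ is_lim v p_infty 0 /\ is_lim (Derive v) p_infty 0.

Definition Yset (n : nat) (sigma b : R) (v : R -> R) : Prop :=
  C10 b v /\
  (forall x, b <= x -> 0 < v x) /\
  (forall x, b <= x -> Rabs (Derive v x) < 4 * (INR n - 1) / (sigma * x ^ 2)).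

(* C^1 sup norm on [b,+oo), valued in Rbar (+oo if unbounded).
   The sup of |w'| is taken over (b,+oo); for a C^1 function on [b,+oo)
   it coincides with the sup over [b,+oo) by continuity of w'. *)
Definition C1norm (b : R) (w : R -> R) : Rbar :=
  Rbar_plus (Lub_Rbar (fun y => exists x, b <= x /\ y = Rabs (w x)))
            (Lub_Rbar (fun y => exists x, b < x /\ y = Rabs (Derive w x))).

Definition Tsig (n : nat) (sigma : R) (v : R -> R) (x : R) : R :=
  2 * (INR n - 1) * x *
  RInt_gen (fun t =>
     / t ^ 2 *
     RInt_gen (fun s =>
        (1 + (Derive v s + sigma) ^ 2) / (v s + sigma * s) * (s / 2) *
        exp (- RInt (fun z => z / 2 * (1 + (Derive v z + sigma) ^ 2)) t s))
       (at_point t) (Rbar_locally p_infty))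
    (at_point x) (Rbar_locally p_infty).

(* Main.v *)
Require Import Defs.
From Stdlib Require Import Reals Lra Psatz.
From Coquelicot Require Import Coquelicot.
Open Scope R_scope.


Definition limi (F : R -> R) (l : R) :=
  forall eps, 0 < eps -> exists M, forall B, M < B -> Rabs (F B - l) < eps.

Lemma L2G (f : R -> R) a l :
  (forall B, a <= B -> ex_RInt f a B) -> limi (fun B => RInt f a B) l ->
  is_RInt_gen f (at_point a) (Rbar_locally p_infty) l.
Proof.
intros Hex Hl P [eps HP].
destruct (Hl eps (cond_pos eps)) as [M HM].
apply (Filter_prod _ _ _ (fun x => x = a) (fun B => Rmax a M < B)).
- reflexivity.
- exists (Rmax a M). auto.
- intros x y -> Hy. simpl. exists (RInt f a y). split.
  + apply (@RInt_correct R_CompleteNormedModule), Hex. generalize (Rmax_l a M); lra.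
  + apply HP. apply HM. generalize (Rmax_r a M); lra.
Qed.

Lemma G2L (f : R -> R) a l :
  is_RInt_gen f (at_point a) (Rbar_locally p_infty) l -> limi (fun B => RInt f a B) l.
Proof.
intros H eps Heps.
destruct (H (ball l (mkposreal eps Heps))) as [Q R HQ [M HR] HP].
- exists (mkposreal eps Heps). auto.
- exists M. intros B HB. destruct (HP a B HQ (HR B HB)) as [y [Hy Hb]].
  simpl in Hy. rewrite (is_RInt_unique _ _ _ _ Hy). exact Hb.
Qed.

Lemma limi_unique F l1 l2 : limi F l1 -> limi F l2 -> l1 = l2.
Proof.
intros H1 H2. destruct (Req_dec l1 l2) as [|Hne]; auto.
set (e := Rabs (l1 - l2) / 2).
assert (He : 0 < e).
{ unfold e. assert (0 < Rabs (l1 - l2)) by (apply Rabs_pos_lt; intro; apply Hne; lra). lra. }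
destruct (H1 e He) as [M1 HM1]. destruct (H2 e He) as [M2 HM2].
set (B := Rmax M1 M2 + 1).
specialize (HM1 B ltac:(unfold B; generalize (Rmax_l M1 M2); lra)).
specialize (HM2 B ltac:(unfold B; generalize (Rmax_r M1 M2); lra)).
unfold e in *.
assert (Rabs (l1 - l2) <= Rabs (F B - l1) + Rabs (F B - l2)).
{ replace (l1 - l2) with (-(F B - l1) + (F B - l2)) by ring.
  eapply Rle_trans; [apply Rabs_triang|]. rewrite Rabs_Ropp; lra. }
lra.
Qed.

Lemma limi_le F l M a : limi F l -> (forall B, a <= B -> F B <= M) -> l <= M.
Proof.
intros H HB. destruct (Rle_dec l M) as [|Hn]; auto.
destruct (H (l - M)) as [M0 HM0]; [lra|].
set (B := Rmax a M0 + 1).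
specialize (HM0 B ltac:(unfold B; generalize (Rmax_r a M0); lra)).
specialize (HB B ltac:(unfold B; generalize (Rmax_l a M0); lra)).
apply Rabs_def2 in HM0. lra.
Qed.

Lemma abs_le_inv x M : Rabs x <= M -> -M <= x <= M.
Proof. unfold Rabs; destruct (Rcase_abs x); lra. Qed.

Lemma limi_abs_le F l M a : limi F l -> (forall B, a <= B -> Rabs (F B) <= M) -> Rabs l <= M.
Proof.
intros H HB. apply Rabs_le. split.
- assert (H' : limi (fun B => - F B) (- l)).
  { intros e He. destruct (H e He) as [M0 HM]. exists M0. intros B HB'.
    replace (- F B - - l) with (-(F B - l)) by ring. rewrite Rabs_Ropp. auto. }
  assert (- l <= M). { apply (limi_le _ _ _ a H'). intros B HB'. specialize (HB B HB').
    apply abs_le_inv in HB. lra. } lra.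
- apply (limi_le _ _ _ a H). intros B HB'. specialize (HB B HB'). apply abs_le_inv in HB. lra.
Qed.

Lemma limi_minus F G l1 l2 : limi F l1 -> limi G l2 -> limi (fun B => F B - G B) (l1 - l2).
Proof.
intros H1 H2 e He. destruct (H1 (e/2)) as [M1 HM1]; [lra|]. destruct (H2 (e/2)) as [M2 HM2]; [lra|].
exists (Rmax M1 M2). intros B HB.
specialize (HM1 B ltac:(generalize (Rmax_l M1 M2); lra)).
specialize (HM2 B ltac:(generalize (Rmax_r M1 M2); lra)).
replace (F B - G B - (l1 - l2)) with ((F B - l1) - (G B - l2)) by ring.
eapply Rle_lt_trans; [apply Rabs_triang|]. rewrite Rabs_Ropp. lra.
Qed.

Lemma limi_mono F a M : (forall x y, a <= x -> x <= y -> F x <= F y) ->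
  (forall x, a <= x -> F x <= M) -> exists l, limi F l.
Proof.
intros Hm Hb.
set (E := fun y => exists x, a <= x /\ y = F x).
assert (Hbd : bound E). { exists M. intros y [x [Hx ->]]. auto. }
assert (Hne : exists y, E y). { exists (F a). exists a. split; [lra|auto]. }
destruct (completeness E Hbd Hne) as [l [Hub Hlub]].
exists l. intros e He.
destruct (Rlt_dec (l - e) (F a)) as [Hlt|Hnlt].
- exists a. intros B HB. assert (F B <= l) by (apply Hub; exists B; split; [lra|auto]).
  assert (F a <= F B) by (apply Hm; lra). apply Rabs_def1; lra.
- assert (exists x, a <= x /\ l - e < F x) as [x0 [Hx0 Hlx]].
  { apply Classical_Pred_Type.not_all_not_ex. intros Hall.
    assert (l <= l - e). { apply Hlub. intros y [x [Hx ->]].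
      destruct (Rlt_dec (l - e) (F x)) as [h|h]; [exfalso; apply (Hall x); auto|lra]. }
    lra. }
  exists x0. intros B HB. assert (F B <= l) by (apply Hub; exists B; split; [lra|auto]).
  assert (F x0 <= F B) by (apply Hm; lra). apply Rabs_def1; lra.
Qed.

Lemma gen_exists (f : R -> R) a M :
  (forall B, a <= B -> ex_RInt f a B) ->
  (forall x, a <= x -> 0 <= f x) ->
  (forall B, a <= B -> RInt f a B <= M) ->
  exists l, is_RInt_gen f (at_point a) (Rbar_locally p_infty) l /\ limi (fun B => RInt f a B) l.
Proof.
intros Hex Hpos Hb.
destruct (limi_mono (fun B => RInt f a B) a M) as [l Hl].
- intros x y Hx Hxy. rewrite <- (RInt_Chasles f a x y).
  + assert (0 <= RInt f x y). { apply RInt_ge_0; auto.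
      * apply (ex_RInt_Chasles_2 f a); [lra|]. apply Hex; lra.
      * intros z Hz; apply Hpos; lra. }
    simpl. unfold plus; simpl. lra.
  + apply Hex; lra.
  + apply (ex_RInt_Chasles_2 f a); [lra|]. apply Hex; lra.
- exact Hb.
- exists l. split; auto. apply L2G; auto.
Qed.


Lemma div_nn a b : 0 <= a -> 0 < b -> 0 <= a / b.
Proof. intros; unfold Rdiv; apply Rmult_le_pos; [lra| left; apply Rinv_0_lt_compat; lra]. Qed.

Lemma expl x y : x <= y -> exp x <= exp y.
Proof. intros [H|H]; [left; apply exp_increasing; auto| rewrite H; lra]. Qed.

Lemma exp_diff a b m : m <= a -> m <= b -> Rabs (exp (-a) - exp (-b)) <= Rabs (a - b) * exp (-m).
Proof.
assert (key : forall a b, m <= a -> a <= b -> exp (-a) - exp (-b) <= (b - a) * exp (-m)).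
{ intros x y Hx Hxy. replace (-x) with (-y + (y - x)) by ring. rewrite exp_plus.
  assert (exp (-y) <= exp (-m)) by (apply expl; lra).
  pose proof (exp_ineq1_le (-(y-x))).
  assert (exp (-y) * exp (y - x) - exp (-y) = exp (-y) * (exp (y-x) - 1)) by ring.
  assert (E: exp (-y) * exp (y-x) = exp (-x)). { rewrite <- exp_plus. f_equal; ring. }
  assert (exp (-x) <= exp (-m)) by (apply expl; lra).
  (* exp(-x) - exp(-y) = exp(-x)(1 - exp(-(y-x))) <= exp(-x)(y-x) *)
  assert (E2: exp (-y) = exp (-x) * exp (-(y-x))). { rewrite <- exp_plus. f_equal; ring. }
  rewrite E. rewrite E2.
  pose proof (exp_pos (-x)). pose proof (exp_pos (-(y-x))).
  nra. }
intros Ha Hb. destruct (Rle_dec a b) as [H|H].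
- assert (exp (-b) <= exp (-a)) by (apply expl; lra).
  rewrite Rabs_right by lra. rewrite (Rabs_left1 (a - b)) by lra.
  pose proof (key a b Ha H). nra.
- assert (exp (-a) <= exp (-b)) by (apply expl; lra).
  rewrite Rabs_left1 by lra. rewrite (Rabs_right (a - b)) by lra.
  pose proof (key b a Hb ltac:(lra)). nra.
Qed.

Lemma yexp y : 0 <= y -> y * exp (-y) <= 2 * exp (-(y/2)).
Proof.
intros Hy. pose proof (exp_ineq1_le (y/2)).
assert (E: exp (-y) = exp (-(y/2)) * exp (-(y/2))). { rewrite <- exp_plus. f_equal; field. }
rewrite E. assert (exp (-(y/2)) * exp (y/2) = 1). { rewrite <- exp_plus. replace (-(y/2) + y/2) with 0 by field. apply exp_0. }
pose proof (exp_pos (-(y/2))). nra.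
Qed.

Section PW.
Variables (sigma K A B s t : R).
Hypotheses (Hs : 0 < sigma) (HK : 0 <= K) (HA : 0 <= A) (HB : 0 <= B) (Ht : 1 <= t) (Hts : t <= s).

Definition Pc := (1 + (sigma + K)^2) / (2 * sigma).
Definition Qc := (sigma + K) / sigma + (1 + (sigma + K)^2) / (2 * sigma^2).
Definition Dc := Qc + 8 * Pc * (sigma + K).

Definition cc (d u : R) := (1 + (d + sigma)^2) / (u + sigma * s) * (s / 2).

Definition ee := exp (- (t * (s - t)) / 4).
Definition yy := (s^2 - t^2) / 4.

Lemma abs_le_inv' x M : Rabs x <= M -> -M <= x <= M.
Proof. unfold Rabs; destruct (Rcase_abs x); lra. Qed.

Lemma yy_ge : t * (s - t) / 2 <= yy.
Proof. unfold yy. nra. Qed.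

Lemma exp_yy_ee : exp (- (yy / 2)) <= ee.
Proof. unfold ee. apply expl. pose proof yy_ge. lra. Qed.

Lemma exp_yy_ee' : exp (- yy) <= ee.
Proof. eapply Rle_trans; [|apply exp_yy_ee]. apply expl. pose proof yy_ge. nra. Qed.

Lemma sq_bound d : Rabs d <= K -> (d + sigma)^2 <= (sigma + K)^2.
Proof. intros Hd. apply abs_le_inv' in Hd. nra. Qed.

Lemma r_bound u : 0 < u -> 0 < s / (u + sigma * s) <= / sigma.
Proof.
intros Hu. assert (0 < u + sigma * s) by nra. split.
- apply Rdiv_lt_0_compat; lra.
- unfold Rdiv. apply (Rmult_le_reg_l (u + sigma * s)); auto.
  replace ((u + sigma * s) * (s * / (u + sigma * s))) with s by (field; lra).
  apply (Rmult_le_reg_l sigma); auto.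
  replace (sigma * ((u + sigma * s) * / sigma)) with (u + sigma * s) by (field; lra). nra.
Qed.

Lemma cc_eq d u : 0 < u -> cc d u = (1 + (d + sigma)^2) * (s / (u + sigma * s)) / 2.
Proof. intros Hu. unfold cc. field. nra. Qed.

Lemma cc_bound d u : Rabs d <= K -> 0 < u -> 0 <= cc d u <= Pc.
Proof.
intros Hd Hu. rewrite cc_eq by auto. pose proof (r_bound u Hu). pose proof (sq_bound d Hd).
set (r := s / (u + sigma * s)) in *. unfold Pc.
assert (Hr: r * sigma <= 1). { destruct H as [H1 H2]. apply (Rmult_le_compat_r sigma) in H2; [|lra].
  rewrite Rinv_l in H2; lra. }
split.
- pose proof (pow2_ge_0 (d+sigma)). nra.
- apply (Rmult_le_reg_l (2 * sigma)); [lra|].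
  replace (2 * sigma * ((1 + (sigma + K) ^ 2) / (2 * sigma))) with (1 + (sigma + K)^2) by (field; lra).
  pose proof (pow2_ge_0 (d+sigma)). nra.
Qed.

Lemma cc_diff d1 d2 u1 u2 : Rabs d1 <= K -> Rabs d2 <= K -> 0 < u1 -> 0 < u2 ->
  Rabs (d2 - d1) <= B -> Rabs (u2 - u1) <= A ->
  Rabs (cc d2 u2 - cc d1 u1) <= Qc * (A + B).
Proof.
intros Hd1 Hd2 Hu1 Hu2 HdB HuA.
rewrite !cc_eq by auto.
pose proof (r_bound u1 Hu1) as [R1a R1b]. pose proof (r_bound u2 Hu2) as [R2a R2b].
assert (Hrr : (s / (u2 + sigma * s) - s / (u1 + sigma * s)) * s =
   (s / (u1 + sigma * s)) * (s / (u2 + sigma * s)) * (u1 - u2)) by (field; split; nra).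
set (r1 := s / (u1 + sigma * s)) in *. set (r2 := s / (u2 + sigma * s)) in *.
pose proof (sq_bound d1 Hd1). apply abs_le_inv' in Hd1. apply abs_le_inv' in Hd2.
apply abs_le_inv' in HdB. apply abs_le_inv' in HuA.
assert (Hs1: r1 * sigma <= 1). { apply (Rmult_le_compat_r sigma) in R1b; [|lra]. rewrite Rinv_l in R1b; lra. }
assert (Hs2: r2 * sigma <= 1). { apply (Rmult_le_compat_r sigma) in R2b; [|lra]. rewrite Rinv_l in R2b; lra. }
assert (Hd : Rabs (r2 - r1) <= A / sigma^2).
{ assert (Rabs (r2 - r1) * s = r1 * r2 * Rabs (u1 - u2)).
  { rewrite <- (Rabs_right s) by lra. rewrite <- Rabs_mult. rewrite Hrr.
    rewrite !Rabs_mult. rewrite (Rabs_right r1) by lra. rewrite (Rabs_right r2) by lra. auto. }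
  assert (Rabs (u1 - u2) <= A). { rewrite Rabs_minus_sym. apply Rabs_le; lra. }
  assert (r1 * r2 * sigma^2 <= 1).
  { replace (r1 * r2 * sigma^2) with ((r1 * sigma) * (r2 * sigma)) by ring.
    replace 1 with (1 * 1) by ring. apply Rmult_le_compat; try lra; apply Rmult_le_pos; lra. }
  assert (Rabs (r2 - r1) <= Rabs (r2 - r1) * s). { pose proof (Rabs_pos (r2 - r1)). nra. }
  apply (Rmult_le_reg_r (sigma^2)); [nra|].
  replace (A / sigma ^ 2 * sigma ^ 2) with A by (field; lra).
  assert (0 <= Rabs (u1 - u2)) by apply Rabs_pos.
  nra. }
apply abs_le_inv' in Hd.
replace ((1 + (d2 + sigma) ^ 2) * r2 / 2 - (1 + (d1 + sigma) ^ 2) * r1 / 2) with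
  ((d2 - d1) * (d2 + d1 + 2 * sigma) * r2 / 2 + (1 + (d1 + sigma)^2) * (r2 - r1) / 2) by field.
unfold Qc.
assert (X1 : Rabs ((d2 - d1) * (d2 + d1 + 2 * sigma) * r2 / 2) <= (sigma + K) / sigma * B).
{ unfold Rdiv. rewrite !Rabs_mult. rewrite (Rabs_right r2) by lra. rewrite (Rabs_right (/2)) by lra.
  assert (Rabs (d2 + d1 + 2 * sigma) <= 2 * (sigma + K)) by (apply Rabs_le; lra).
  assert (Rabs (d2 - d1) <= B) by (apply Rabs_le; lra).
  assert (r2 <= / sigma) by auto.
  pose proof (Rabs_pos (d2 - d1)). pose proof (Rabs_pos (d2 + d1 + 2 * sigma)).
  assert (Rabs (d2 - d1) * Rabs (d2 + d1 + 2 * sigma) <= B * (2 * (sigma + K))) by (apply Rmult_le_compat; lra).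
  assert (Rabs (d2 - d1) * Rabs (d2 + d1 + 2 * sigma) * r2 <= B * (2 * (sigma + K)) * / sigma).
  { apply Rmult_le_compat; try lra. apply Rmult_le_pos; lra. }
  apply Rle_trans with (B * (2 * (sigma + K)) * / sigma * / 2);
    [apply Rmult_le_compat_r; lra | right; field; lra]. }
assert (X2 : Rabs ((1 + (d1 + sigma)^2) * (r2 - r1) / 2) <= (1 + (sigma + K)^2) / (2 * sigma^2) * A).
{ unfold Rdiv. rewrite !Rabs_mult. rewrite (Rabs_right (/2)) by lra.
  rewrite (Rabs_right (1 + (d1 + sigma)^2)) by (pose proof (pow2_ge_0 (d1 + sigma)); lra).
  assert (Rabs (r2 - r1) <= A * / sigma^2) by (apply Rabs_le; unfold Rdiv in Hd; lra).
  pose proof (Rabs_pos (r2 - r1)).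
  assert ((1 + (d1 + sigma) ^ 2) * Rabs (r2 - r1) <= (1 + (sigma + K)^2) * (A * / sigma^2)).
  { pose proof (pow2_ge_0 (d1 + sigma)). apply Rmult_le_compat; lra. }
  apply Rle_trans with ((1 + (sigma + K)^2) * (A * / sigma^2) * / 2);
    [apply Rmult_le_compat_r; lra | right; field; lra]. }
eapply Rle_trans; [apply Rabs_triang|].
assert (0 <= (sigma + K) / sigma) by (apply div_nn; lra).
assert (0 <= (1 + (sigma + K) ^ 2) / (2 * sigma ^ 2)) by (apply div_nn; [pose proof (pow2_ge_0 (sigma+K)); lra| pose proof (pow2_ge_0 sigma); nra]).
nra.
Qed.

Definition FF (d u Phi : R) := cc d u * exp (- Phi).

Lemma FF_bound d u Phi : Rabs d <= K -> 0 < u -> yy <= Phi -> 0 <= FF d u Phi <= Pc * ee.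
Proof.
intros Hd Hu HP. unfold FF. pose proof (cc_bound d u Hd Hu).
assert (exp (- Phi) <= ee). { eapply Rle_trans; [|apply exp_yy_ee']. apply expl; lra. }
pose proof (exp_pos (- Phi)). split; nra.
Qed.

Lemma FF_diff d1 d2 u1 u2 P1 P2 : Rabs d1 <= K -> Rabs d2 <= K -> 0 < u1 -> 0 < u2 ->
  Rabs (d2 - d1) <= B -> Rabs (u2 - u1) <= A ->
  yy <= P1 -> yy <= P2 -> Rabs (P2 - P1) <= 4 * (sigma + K) * B * yy ->
  Rabs (FF d2 u2 P2 - FF d1 u1 P1) <= Dc * (A + B) * ee.
Proof.
intros Hd1 Hd2 Hu1 Hu2 HdB HuA HP1 HP2 HPd. unfold FF.
pose proof (cc_diff d1 d2 u1 u2 Hd1 Hd2 Hu1 Hu2 HdB HuA) as Hc.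
pose proof (cc_bound d1 u1 Hd1 Hu1) as Hc1.
assert (HE2 : exp (- P2) <= ee). { eapply Rle_trans; [|apply exp_yy_ee']. apply expl; lra. }
assert (HyP : 0 <= yy) by (pose proof yy_ge; nra).
assert (HEd : Rabs (exp (-P2) - exp (-P1)) <= 8 * (sigma + K) * B * ee).
{ eapply Rle_trans; [apply (exp_diff P2 P1 yy); auto|].
  pose proof (yexp yy HyP). pose proof exp_yy_ee. pose proof (exp_pos (-yy)).
  assert (Rabs (P2 - P1) * exp (- yy) <= 4 * (sigma + K) * B * (yy * exp (- yy))).
  { pose proof (Rabs_pos (P2 - P1)). nra. }
  assert (0 <= 4 * (sigma + K) * B) by nra.
  assert (4 * (sigma + K) * B * (yy * exp (- yy)) <= 4 * (sigma + K) * B * (2 * ee)).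
  { apply Rmult_le_compat_l; auto. lra. }
  lra. }
replace (cc d2 u2 * exp (- P2) - cc d1 u1 * exp (- P1)) with
   ((cc d2 u2 - cc d1 u1) * exp (- P2) + cc d1 u1 * (exp (-P2) - exp (-P1))) by ring.
eapply Rle_trans; [apply Rabs_triang|]. rewrite !Rabs_mult.
rewrite (Rabs_right (exp (-P2))) by (left; apply exp_pos).
rewrite (Rabs_right (cc d1 u1)) by lra.
pose proof (exp_pos (-P2)). pose proof (Rabs_pos (cc d2 u2 - cc d1 u1)).
pose proof (Rabs_pos (exp (- P2) - exp (- P1))).
assert (0 <= Qc * (A + B)) by (eapply Rle_trans; [apply H0|apply Hc]).
assert (T1 : Rabs (cc d2 u2 - cc d1 u1) * exp (- P2) <= Qc * (A + B) * ee).
{ apply Rmult_le_compat; auto; lra. }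
assert (T2 : cc d1 u1 * Rabs (exp (- P2) - exp (- P1)) <= Pc * (8 * (sigma + K) * B * ee)).
{ apply Rmult_le_compat; lra. }
unfold Dc. assert (0 <= ee) by (unfold ee; left; apply exp_pos).
assert (0 <= Pc) by lra. assert (0 <= Pc * 8 * (sigma + K) * A * ee).
{ apply Rmult_le_pos; [|lra]. apply Rmult_le_pos; [|lra]. apply Rmult_le_pos; [|lra]. apply Rmult_le_pos; lra. }
nra.
Qed.
End PW.


Lemma RInt_correctR (f : R -> R) a b : ex_RInt f a b -> is_RInt f a b (RInt f a b).
Proof. exact (@RInt_correct R_CompleteNormedModule f a b). Qed.

Lemma cplus (f g : R -> R) x : continuous f x -> continuous g x -> continuous (fun y => f y + g y) x.
Proof. exact (continuous_plus f g x). Qed.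
Lemma cmult (f g : R -> R) x : continuous f x -> continuous g x -> continuous (fun y => f y * g y) x.
Proof. exact (continuous_mult f g x). Qed.
Lemma copp (f : R -> R) x : continuous f x -> continuous (fun y => - f y) x.
Proof. exact (continuous_opp f x). Qed.
Lemma cconst (c x : R) : continuous (fun _ : R => c) x.
Proof. exact (continuous_const c x). Qed.
Lemma cid (x : R) : continuous (fun y : R => y) x.
Proof. exact (continuous_id x). Qed.
Lemma cinv (f : R -> R) x : continuous f x -> f x <> 0 -> continuous (fun y => / f y) x.
Proof.
intros H Hn. apply continuity_pt_filterlim. apply continuity_pt_filterlim in H.
apply (continuity_pt_inv f x H Hn).
Qed.
Lemma cexp (f : R -> R) x : continuous f x -> continuous (fun y => exp (f y)) x.
Proof.
intros H. apply (continuous_comp f exp). auto.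
apply continuity_pt_filterlim. apply derivable_continuous_pt. apply derivable_pt_exp.
Qed.
Lemma cpow2 (f : R -> R) x : continuous f x -> continuous (fun y => (f y)^2) x.
Proof. intros H. simpl. apply cmult; auto. apply cmult; auto. apply cconst. Qed.
Lemma cdiv (f g : R -> R) x : continuous f x -> continuous g x -> g x <> 0 -> continuous (fun y => f y / g y) x.
Proof. intros. unfold Rdiv. apply cmult; auto. apply cinv; auto. Qed.

Lemma cmax (b x : R) : continuous (fun s => Rmax b s) x.
Proof.
apply (continuous_ext (fun s => (b + s + Rabs (s - b)) / 2)).
- assert (H: forall s : R, (b + s + Rabs (s - b)) / 2 = Rmax b s).
  { intros s. destruct (Rle_dec b s).
    + rewrite Rmax_right by lra. rewrite Rabs_right by lra. field.
    + rewrite Rmax_left by lra. rewrite Rabs_left by lra. field. }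
  intros s. apply H.
- apply cdiv; [| apply cconst | lra]. apply cplus; [apply cplus; [apply cconst| apply cid]|].
  apply (continuous_comp (fun s => s - b) Rabs).
  + apply cplus; [apply cid | apply cconst].
  + apply continuity_pt_filterlim. apply Rcontinuity_abs.
Qed.

Lemma locally_gt (x c : R) : c < x -> locally x (fun y => c < y).
Proof.
intros H. exists (mkposreal (x - c) ltac:(lra)). intros y Hy.
unfold ball in Hy; simpl in Hy; unfold AbsRing_ball, abs, minus, plus, opp in Hy; simpl in Hy.
apply Rabs_lt_between in Hy. lra.
Qed.


Ltac req := match goal with |- ?a = ?c => change (@eq R a c) end.

Lemma ee_int t B : 1 <= t -> t <= B -> ex_RInt (fun s => ee s t) t B /\ RInt (fun s => ee s t) t B <= 4 / t.
Proof.
intros Ht HB.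
assert (H : is_RInt (fun s => ee s t) t B (minus (- 4 / t * ee B t) (- 4 / t * ee t t))).
{ apply (is_RInt_derive (fun s => - 4 / t * ee s t)).
  - intros x _. unfold ee. auto_derive; auto. req. unfold Rminus, Rdiv. field. lra.
  - intros x _. unfold ee. apply cexp. apply cdiv; [|apply cconst|lra]. apply copp.
    apply cmult; [apply cconst|]. apply cplus; [apply cid| apply cconst]. }
split; [eexists; eauto|].
rewrite (is_RInt_unique _ _ _ _ H). unfold minus, plus, opp; simpl.
unfold ee. replace (t - t) with 0 by ring. rewrite Rmult_0_r, Ropp_0, Rdiv_0_l, exp_0.
pose proof (exp_pos (- (t * (B - t)) / 4)).
assert (0 < / t) by (apply Rinv_0_lt_compat; lra). unfold Rdiv. nra.
Qed.


Lemma limi_ext_ev (F G : R -> R) a l : (forall B, a <= B -> F B = G B) -> limi G l -> limi F l.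
Proof.
intros He H e He'. destruct (H e He') as [M HM]. exists (Rmax a M). intros B HB.
rewrite He by (generalize (Rmax_l a M); lra). apply HM. generalize (Rmax_r a M); lra.
Qed.

Lemma limi_affine (G : R -> R) l c d : limi G l -> limi (fun B => c * (G B - d)) (c * (l - d)).
Proof.
intros H e He. destruct (H (e / (Rabs c + 1))) as [M HM].
{ apply Rdiv_lt_0_compat; auto. pose proof (Rabs_pos c); lra. }
exists M. intros B HB. specialize (HM B HB).
replace (c * (G B - d) - c * (l - d)) with (c * (G B - l)) by ring.
rewrite Rabs_mult. pose proof (Rabs_pos c). pose proof (Rabs_pos (G B - l)).
assert (Rabs (G B - l) * (Rabs c + 1) < e).
{ apply (Rmult_lt_compat_r (Rabs c + 1)) in HM; [|lra].
  replace (e / (Rabs c + 1) * (Rabs c + 1)) with e in HM by (field; lra). lra. }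
nra.
Qed.

Lemma limi_ge F l a : limi F l -> (forall B, a <= B -> 0 <= F B) -> 0 <= l.
Proof.
intros H Hp. assert (H' : limi (fun B => -1 * (F B - 0)) (-1 * (l - 0))) by (apply limi_affine; auto).
assert (-1 * (l - 0) <= 0). { apply (limi_le _ _ _ a H'). intros B HB. specialize (Hp B HB). lra. }
lra.
Qed.

Lemma is_derive_val (f : R -> R) x l1 l2 : l1 = l2 -> is_derive f x l1 -> is_derive f x l2.
Proof. intros ->; auto. Qed.

Lemma cube_int x B : 1 <= x -> x <= B -> ex_RInt (fun t => / t ^ 3) x B /\ RInt (fun t => / t ^ 3) x B <= / (2 * x ^ 2).
Proof.
intros Hx HB.
assert (H : is_RInt (fun t => / t ^ 3) x B (minus (- / (2 * B ^ 2)) (- / (2 * x ^ 2)))).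
{ apply (is_RInt_derive (fun t => - / (2 * t ^ 2))).
  - intros y Hy. assert (0 < y). { assert (Rmin x B = x) by (apply Rmin_left; lra). lra. }
    auto_derive. nra. req. field. lra.
  - intros y Hy. assert (0 < y). { assert (Rmin x B = x) by (apply Rmin_left; lra). lra. }
    apply cinv. simpl. apply cmult; [apply cid|]. apply cmult; [apply cid|]. apply cmult; [apply cid|apply cconst].
    pose proof (pow_lt y 3). lra. }
split; [eexists; eauto|]. rewrite (is_RInt_unique _ _ _ _ H). unfold minus, plus, opp; simpl.
assert (0 < / (2 * (B * (B * 1)))). { apply Rinv_0_lt_compat. nra. }
lra.
Qed.

Section V.
Variables (sigma b K : R) (v : R -> R).
Hypotheses (Hs : 0 < sigma) (Hb : 1 <= b) (HK : 0 <= K)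
 (Hvc : forall x, b <= x -> continuous v x)
 (Hdc : forall x, b <= x -> continuous (Derive v) x)
 (Hvp : forall x, b <= x -> 0 < v x)
 (Hdb : forall x, b <= x -> Rabs (Derive v x) <= K).

Definition dv s := Derive v (Rmax b s).
Definition vv s := v (Rmax b s).
Definition hh z := z / 2 * (1 + (dv z + sigma) ^ 2).
Definition ff t s := (1 + (dv s + sigma) ^ 2) / (vv s + sigma * s) * (s / 2) * exp (- RInt hh t s).
Definition fo t s := (1 + (Derive v s + sigma) ^ 2) / (v s + sigma * s) * (s / 2) *
        exp (- RInt (fun z => z / 2 * (1 + (Derive v z + sigma) ^ 2)) t s).
Definition phi t := RInt hh b t.

Lemma dv_cont x : continuous dv x.
Proof. apply (continuous_comp (fun s => Rmax b s) (Derive v)); [apply cmax| apply Hdc, Rmax_l]. Qed.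
Lemma vv_cont x : continuous vv x.
Proof. apply (continuous_comp (fun s => Rmax b s) v); [apply cmax| apply Hvc, Rmax_l]. Qed.
Lemma vv_pos x : 0 < vv x.
Proof. apply Hvp, Rmax_l. Qed.
Lemma dv_bd x : Rabs (dv x) <= K.
Proof. apply Hdb, Rmax_l. Qed.
Lemma hh_cont x : continuous hh x.
Proof.
unfold hh. apply cmult. apply cdiv; [apply cid|apply cconst|lra].
apply cplus; [apply cconst|]. apply cpow2. apply cplus; [apply dv_cont|apply cconst].
Qed.
Lemma hh_ex x y : ex_RInt hh x y.
Proof. apply (ex_RInt_continuous (V:=R_CompleteNormedModule)). intros; apply hh_cont. Qed.
Lemma rint_hh_der t x : is_derive (RInt hh t) x (hh x).
Proof.
apply (is_derive_RInt hh (RInt hh t) t); [|apply hh_cont]. apply filter_forall. intros y. apply RInt_correctR, hh_ex.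
Qed.
Lemma rint_hh_cont t x : continuous (RInt hh t) x.
Proof. apply (ex_derive_continuous (K:=R_AbsRing) (V:=R_NormedModule)). eexists; apply rint_hh_der. Qed.
Lemma phi_cont x : continuous phi x.
Proof. apply rint_hh_cont. Qed.
Lemma RInt_hh t s : RInt hh t s = phi s - phi t.
Proof.
unfold phi. assert (HC: RInt hh b t + RInt hh t s = RInt hh b s) by (apply (RInt_Chasles (V:=R_CompleteNormedModule)); apply hh_ex). lra.
Qed.
Lemma ff_eq t s : ff t s = exp (phi t) * ff b s.
Proof.
unfold ff. rewrite (RInt_hh t s). fold (phi s).
replace (-(phi s - phi t)) with (phi t + - phi s) by ring. rewrite exp_plus. ring.
Qed.
Lemma ff_cont t s : 0 < s -> continuous (ff t) s.
Proof.
intros Hs0. unfold ff. apply cmult; [apply cmult|].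
- apply cdiv.
  + apply cplus; [apply cconst|]. apply cpow2. apply cplus; [apply dv_cont|apply cconst].
  + apply cplus; [apply vv_cont|]. apply cmult; [apply cconst|apply cid].
  + pose proof (vv_pos s). nra.
- apply cdiv; [apply cid|apply cconst|lra].
- apply cexp. apply copp. apply rint_hh_cont.
Qed.
Lemma ff_ex t x y : 0 < x -> 0 < y -> ex_RInt (ff t) x y.
Proof.
intros. apply (ex_RInt_continuous (V:=R_CompleteNormedModule)). intros z Hz. apply ff_cont.
assert (0 < Rmin x y) by (apply Rmin_glb_lt; auto). lra.
Qed.

Lemma hh_lower t s : 0 <= t <= s -> yy s t <= RInt hh t s.
Proof.
intros Hts.
assert (H : is_RInt (fun z => z / 2) t s (minus (s^2/4) (t^2/4))).
{ apply (is_RInt_derive (fun z => z^2/4)).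
  - intros x _. auto_derive; auto. req. field.
  - intros x _. apply cdiv; [apply cid|apply cconst|lra]. }
unfold yy. replace ((s^2 - t^2)/4) with (RInt (fun z => z / 2) t s).
2:{ rewrite (is_RInt_unique _ _ _ _ H). unfold minus, plus, opp; simpl. field. }
apply RInt_le; try lra.
- eexists; eauto.
- apply hh_ex.
- intros x Hx. unfold hh. pose proof (pow2_ge_0 (dv x + sigma)). nra.
Qed.

Lemma ff_FF t s : ff t s = FF sigma s (dv s) (vv s) (RInt hh t s).
Proof. reflexivity. Qed.

Lemma ff_bounds t s : b <= t <= s -> 0 <= ff t s <= Pc sigma K * ee s t.
Proof.
intros H. rewrite ff_FF. apply FF_bound; try lra. apply dv_bd. apply vv_pos.
apply hh_lower. lra.
Qed.

Lemma ff_int_bound t B : b <= t <= B -> 0 <= RInt (ff t) t B <= 4 * Pc sigma K / t.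
Proof.
intros H. destruct (ee_int t B) as [Hex Hle]; try lra.
assert (Hf : ex_RInt (ff t) t B) by (apply ff_ex; lra).
split.
- apply RInt_ge_0; try lra; auto. intros x Hx. apply ff_bounds; lra.
- apply Rle_trans with (RInt (fun s => Pc sigma K * ee s t) t B).
  + apply RInt_le; try lra; auto.
    * apply (ex_RInt_scal (V:=R_NormedModule) (fun s => ee s t) t B (Pc sigma K)). auto.
    * intros x Hx. apply ff_bounds; lra.
  + assert (HS: RInt (fun s => Pc sigma K * ee s t) t B = Pc sigma K * RInt (fun s => ee s t) t B)
      by (apply (RInt_scal (V:=R_CompleteNormedModule)); auto).
    rewrite HS.
    assert (0 <= Pc sigma K). { unfold Pc. apply div_nn. pose proof (pow2_ge_0 (sigma + K)); lra. lra. }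
    apply Rle_trans with (Pc sigma K * (4 / t)); [apply Rmult_le_compat_l; auto | right; field; lra].
Qed.

Definition Ib := RInt_gen (ff b) (at_point b) (Rbar_locally p_infty).

Lemma Pc_nn : 0 <= Pc sigma K.
Proof. unfold Pc. apply div_nn. pose proof (pow2_ge_0 (sigma + K)); lra. lra. Qed.

Lemma Ib_lim : limi (fun B => RInt (ff b) b B) Ib.
Proof.
destruct (gen_exists (ff b) b (4 * Pc sigma K / b)) as [l [Hg Hl]].
- intros B HB. apply ff_ex; lra.
- intros x Hx. apply ff_bounds; lra.
- intros B HB. apply ff_int_bound; lra.
- unfold Ib. rewrite (is_RInt_gen_unique _ _ Hg). auto.
Qed.

Definition It t := exp (phi t) * (Ib - RInt (ff b) b t).

Lemma It_lim t : b <= t -> limi (fun B => RInt (ff t) t B) (It t).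
Proof.
intros Ht. unfold It.
apply (limi_ext_ev _ (fun B => exp (phi t) * (RInt (ff b) b B - RInt (ff b) b t)) t).
- intros B HB.
  assert (E1 : RInt (ff t) t B = RInt (fun s => exp (phi t) * ff b s) t B).
  { apply RInt_ext. intros; apply ff_eq. }
  assert (E2 : RInt (fun s => exp (phi t) * ff b s) t B = exp (phi t) * RInt (ff b) t B)
    by (apply (RInt_scal (V:=R_CompleteNormedModule)); apply ff_ex; lra).
  assert (E3 : RInt (ff b) b t + RInt (ff b) t B = RInt (ff b) b B)
    by (apply (RInt_Chasles (V:=R_CompleteNormedModule)); apply ff_ex; lra).
  rewrite E1, E2. f_equal. lra.
- apply limi_affine. apply Ib_lim.
Qed.

Lemma It_bound t : b <= t -> 0 <= It t <= 4 * Pc sigma K / t.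
Proof.
intros Ht. split.
- apply (limi_ge _ _ t (It_lim t Ht)). intros B HB. apply ff_int_bound; lra.
- apply (limi_le _ _ _ t (It_lim t Ht)). intros B HB. apply ff_int_bound; lra.
Qed.

Lemma fo_ff t s : b <= t <= s -> fo t s = ff t s.
Proof.
intros H.
assert (E: RInt (fun z => z/2*(1+(Derive v z + sigma)^2)) t s = RInt hh t s).
{ apply RInt_ext. intros z Hz. unfold hh, dv.
  assert (Rmin t s = t) by (apply Rmin_left; lra).
  rewrite Rmax_right by lra. auto. }
unfold fo, ff, dv, vv. rewrite Rmax_right by lra. rewrite E. reflexivity.
Qed.

Lemma fo_gen t : b <= t -> is_RInt_gen (fo t) (at_point t) (Rbar_locally p_infty) (It t).
Proof.
intros Ht. apply L2G.
- intros B HB. apply (ex_RInt_ext (ff t)); [|apply ff_ex; lra].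
  intros x Hx. assert (Rmin t B = t) by (apply Rmin_left; lra). symmetry. apply fo_ff. lra.
- apply (limi_ext_ev _ (fun B => RInt (ff t) t B) t _ ); [|apply It_lim; auto].
  intros B HB. apply RInt_ext. intros x Hx. assert (Rmin t B = t) by (apply Rmin_left; lra).
  apply fo_ff. lra.
Qed.

Lemma Igen t : b <= t -> RInt_gen (fo t) (at_point t) (Rbar_locally p_infty) = It t.
Proof. intros Ht. apply (is_RInt_gen_unique _ _ (fo_gen t Ht)). Qed.

Lemma rint_ffb_der x : 0 < x -> is_derive (RInt (ff b) b) x (ff b x).
Proof.
intros Hx. apply (is_derive_RInt (ff b) (RInt (ff b) b) b); [|apply ff_cont; auto].
assert (Hl := locally_gt x 0 Hx). apply (filter_imp (fun y => 0 < y)); auto.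
intros y Hy. apply RInt_correctR. apply ff_ex; lra.
Qed.

Lemma It_cont t : b <= t -> continuous It t.
Proof.
intros Ht. unfold It. apply cmult. apply cexp, phi_cont.
apply cplus; [apply cconst|]. apply copp.
apply (ex_derive_continuous (K:=R_AbsRing) (V:=R_NormedModule)). eexists. apply rint_ffb_der. lra.
Qed.

Definition gt t := / t ^ 2 * It t.

Lemma gt_cont t : b <= t -> continuous gt t.
Proof.
intros Ht. unfold gt. apply cmult; [|apply It_cont; auto].
apply cinv. apply cpow2, cid. pose proof (pow_lt t 2); lra.
Qed.

Lemma gt_bound t : b <= t -> 0 <= gt t <= 4 * Pc sigma K * / t ^ 3.
Proof.
intros Ht. unfold gt. pose proof (It_bound t Ht).
assert (0 < / t ^ 2) by (apply Rinv_0_lt_compat, pow_lt; lra).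
split. nra.
replace (4 * Pc sigma K * / t ^ 3) with (/ t ^ 2 * (4 * Pc sigma K / t)) by (field; lra).
apply Rmult_le_compat_l; lra.
Qed.

Lemma gt_ex x y : b <= x -> b <= y -> ex_RInt gt x y.
Proof.
intros. apply (ex_RInt_continuous (V:=R_CompleteNormedModule)). intros z Hz. apply gt_cont.
assert (b <= Rmin x y) by (apply Rmin_glb; auto). lra.
Qed.

Lemma gt_int_bound x B : b <= x <= B -> 0 <= RInt gt x B <= 2 * Pc sigma K / x ^ 2.
Proof.
intros H. destruct (cube_int x B) as [Hex Hle]; try lra. pose proof Pc_nn.
split.
- apply RInt_ge_0; try lra. apply gt_ex; lra. intros y Hy. apply gt_bound; lra.
- apply Rle_trans with (RInt (fun t => 4 * Pc sigma K * / t ^ 3) x B).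
  + apply RInt_le; try lra. apply gt_ex; lra.
    apply (ex_RInt_scal (V:=R_NormedModule) (fun t => / t ^ 3) x B (4 * Pc sigma K)). auto.
    intros y Hy. apply gt_bound; lra.
  + assert (HS: RInt (fun t => 4 * Pc sigma K * / t ^ 3) x B = 4 * Pc sigma K * RInt (fun t => / t ^ 3) x B)
      by (apply (RInt_scal (V:=R_CompleteNormedModule)); auto).
    rewrite HS. apply Rle_trans with (4 * Pc sigma K * / (2 * x ^ 2)).
    apply Rmult_le_compat_l; lra. right; field. lra.
Qed.

Definition Gb := RInt_gen gt (at_point b) (Rbar_locally p_infty).

Lemma Gb_lim : limi (fun B => RInt gt b B) Gb.
Proof.
destruct (gen_exists gt b (2 * Pc sigma K / b ^ 2)) as [l [Hg Hl]].
- intros B HB. apply gt_ex; lra.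
- intros x Hx. apply gt_bound; lra.
- intros B HB. apply gt_int_bound; lra.
- unfold Gb. rewrite (is_RInt_gen_unique _ _ Hg). auto.
Qed.

Definition Gt x := Gb - RInt gt b x.

Lemma Gt_lim x : b <= x -> limi (fun B => RInt gt x B) (Gt x).
Proof.
intros Hx. unfold Gt.
apply (limi_ext_ev _ (fun B => 1 * (RInt gt b B - RInt gt b x)) x).
- intros B HB.
  assert (E3 : RInt gt b x + RInt gt x B = RInt gt b B)
    by (apply (RInt_Chasles (V:=R_CompleteNormedModule)); apply gt_ex; lra).
  lra.
- replace (Gb - RInt gt b x) with (1 * (Gb - RInt gt b x)) by ring.
  apply limi_affine. apply Gb_lim.
Qed.

Definition go t := / t ^ 2 * RInt_gen (fo t) (at_point t) (Rbar_locally p_infty).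

Lemma go_gt t : b <= t -> go t = gt t.
Proof. intros Ht. unfold go, gt. rewrite Igen; auto. Qed.

Lemma Ggen x : b <= x -> RInt_gen go (at_point x) (Rbar_locally p_infty) = Gt x.
Proof.
intros Hx. apply is_RInt_gen_unique. apply L2G.
- intros B HB. apply (ex_RInt_ext gt); [|apply gt_ex; lra].
  intros y Hy. assert (Rmin x B = x) by (apply Rmin_left; lra). symmetry. apply go_gt. lra.
- apply (limi_ext_ev _ (fun B => RInt gt x B) x _ ); [|apply Gt_lim; auto].
  intros B HB. apply RInt_ext. intros y Hy. assert (Rmin x B = x) by (apply Rmin_left; lra).
  apply go_gt. lra.
Qed.

Lemma Tsig_eq n x : b <= x -> Tsig n sigma v x = 2 * (INR n - 1) * x * Gt x.
Proof. intros Hx. rewrite <- Ggen by auto. reflexivity. Qed.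

Lemma Tsig_der n x : b < x -> is_derive (Tsig n sigma v) x (2 * (INR n - 1) * (Gt x - x * gt x)).
Proof.
intros Hx.
apply (is_derive_ext_loc (fun y => 2 * (INR n - 1) * (y * (Gb - RInt gt b y)))).
- apply (filter_imp (fun y => b < y)); [|apply locally_gt; auto].
  assert (E: forall y : R, b < y -> 2 * (INR n - 1) * (y * (Gb - RInt gt b y)) = Tsig n sigma v y).
  { intros y Hy. rewrite Tsig_eq by lra. unfold Gt. ring. }
  intros y Hy. apply E. auto.
- assert (HR : is_derive (RInt gt b) x (gt x)).
  { apply (is_derive_RInt gt (RInt gt b) b); [|apply gt_cont; lra].
    apply (filter_imp (fun y => b < y)); [|apply locally_gt; auto].
    intros y Hy. apply RInt_correctR. apply gt_ex; lra. }
  assert (HD : is_derive (fun y => Gb - RInt gt b y) x (0 - gt x)).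
  { apply (is_derive_minus (K:=R_AbsRing) (V:=R_NormedModule) (fun _ => Gb) (RInt gt b)).
    apply (is_derive_const (K:=R_AbsRing) (V:=R_NormedModule)). auto. }
  assert (HM : is_derive (fun y => y * (Gb - RInt gt b y)) x (1 * (Gb - RInt gt b x) + x * (0 - gt x))).
  { apply (is_derive_mult (K:=R_AbsRing) (fun y => y) (fun y => Gb - RInt gt b y)).
    apply (is_derive_id (K:=R_AbsRing)). auto. intros; apply Rmult_comm. }
  apply (is_derive_val _ _ (2 * (INR n - 1) * (1 * (Gb - RInt gt b x) + x * (0 - gt x)))).
  + unfold Gt. req. ring.
  + apply is_derive_scal. auto.
Qed.
End V.


Lemma RInt_abs_bound (f g : R -> R) a b : a <= b -> ex_RInt f a b -> ex_RInt g a b ->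
  (forall x, a < x < b -> Rabs (f x) <= g x) -> Rabs (RInt f a b) <= RInt g a b.
Proof.
intros Hab Hf Hg H. eapply Rle_trans; [apply abs_RInt_le; auto|].
apply RInt_le; auto. apply (ex_RInt_norm f a b Hf).
Qed.

Lemma Dc_nn sigma K : 0 < sigma -> 0 <= K -> 0 <= Dc sigma K.
Proof.
intros Hs HK. unfold Dc, Qc, Pc.
assert (0 <= (sigma + K) / sigma) by (apply div_nn; lra).
assert (0 <= (1 + (sigma + K) ^ 2) / (2 * sigma ^ 2)) by (apply div_nn; [pose proof (pow2_ge_0 (sigma+K)); lra| pose proof (pow2_ge_0 sigma); nra]).
assert (0 <= (1 + (sigma + K) ^ 2) / (2 * sigma)) by (apply div_nn; [pose proof (pow2_ge_0 (sigma+K)); lra| lra]).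
assert (0 <= 8 * ((1 + (sigma + K) ^ 2) / (2 * sigma)) * (sigma + K)).
{ apply Rmult_le_pos; lra. }
lra.
Qed.

Section V2.
Variables (sigma b K A B : R) (v1 v2 : R -> R).
Hypotheses (Hs : 0 < sigma) (Hb : 1 <= b) (HK : 0 <= K) (HA : 0 <= A) (HB : 0 <= B)
 (Hvc1 : forall x, b <= x -> continuous v1 x)
 (Hdc1 : forall x, b <= x -> continuous (Derive v1) x)
 (Hvp1 : forall x, b <= x -> 0 < v1 x)
 (Hdb1 : forall x, b <= x -> Rabs (Derive v1 x) <= K)
 (Hvc2 : forall x, b <= x -> continuous v2 x)
 (Hdc2 : forall x, b <= x -> continuous (Derive v2) x)
 (Hvp2 : forall x, b <= x -> 0 < v2 x)
 (Hdb2 : forall x, b <= x -> Rabs (Derive v2 x) <= K)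
 (HvA : forall x, b <= x -> Rabs (v2 x - v1 x) <= A)
 (HdB : forall x, b <= x -> Rabs (Derive v2 x - Derive v1 x) <= B).

Lemma hh_diff t s : b <= t <= s ->
  Rabs (RInt (hh sigma b v2) t s - RInt (hh sigma b v1) t s) <= 4 * (sigma + K) * B * yy s t.
Proof.
intros H.
assert (E : RInt (fun z => hh sigma b v2 z - hh sigma b v1 z) t s = RInt (hh sigma b v2) t s - RInt (hh sigma b v1) t s).
{ apply (RInt_minus (V:=R_CompleteNormedModule)); apply hh_ex; auto. }
rewrite <- E.
eapply Rle_trans.
{ apply abs_RInt_le_const with (M := s * (sigma + K) * B); try lra.
  apply (ex_RInt_minus (V:=R_NormedModule)); apply hh_ex; auto.
  intros z Hz. unfold hh, dv. rewrite Rmax_right by lra.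
  specialize (HdB z ltac:(lra)). specialize (Hdb1 z ltac:(lra)). specialize (Hdb2 z ltac:(lra)).
  apply abs_le_inv' in Hdb1. apply abs_le_inv' in Hdb2.
  replace (z / 2 * (1 + (Derive v2 z + sigma) ^ 2) - z / 2 * (1 + (Derive v1 z + sigma) ^ 2))
    with (z / 2 * ((Derive v2 z - Derive v1 z) * (Derive v2 z + Derive v1 z + 2 * sigma))) by (unfold Rdiv; ring).
  rewrite !Rabs_mult. rewrite (Rabs_right (z / 2)) by lra.
  assert (Rabs (Derive v2 z + Derive v1 z + 2 * sigma) <= 2 * (sigma + K)) by (apply Rabs_le; lra).
  pose proof (Rabs_pos (Derive v2 z - Derive v1 z)). pose proof (Rabs_pos (Derive v2 z + Derive v1 z + 2 * sigma)).
  assert (Rabs (Derive v2 z - Derive v1 z) * Rabs (Derive v2 z + Derive v1 z + 2 * sigma) <= B * (2 * (sigma + K)))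
    by (apply Rmult_le_compat; lra).
  apply Rle_trans with (z / 2 * (B * (2 * (sigma + K)))).
  apply Rmult_le_compat_l; lra.
  assert (0 <= B * (sigma + K)) by (apply Rmult_le_pos; lra).
  replace (z / 2 * (B * (2 * (sigma + K)))) with (z * (B * (sigma + K))) by field.
  replace (s * (sigma + K) * B) with (s * (B * (sigma + K))) by ring.
  apply Rmult_le_compat_r; lra. }
unfold yy.
assert (0 <= (sigma + K) * B) by (apply Rmult_le_pos; lra).
assert ((s - t) * s <= s ^ 2 - t ^ 2) by nra.
replace ((s - t) * (s * (sigma + K) * B)) with ((s - t) * s * ((sigma + K) * B)) by ring.
replace (4 * (sigma + K) * B * ((s ^ 2 - t ^ 2) / 4)) with ((s ^ 2 - t ^ 2) * ((sigma + K) * B)) by field.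
apply Rmult_le_compat_r; lra.
Qed.

Lemma ff_diff t s : b <= t <= s ->
  Rabs (ff sigma b v2 t s - ff sigma b v1 t s) <= Dc sigma K * (A + B) * ee s t.
Proof.
intros H. rewrite !ff_FF. apply FF_diff; try lra.
- apply (dv_bd b K v1); auto.
- apply (dv_bd b K v2); auto.
- apply (vv_pos b v1); auto.
- apply (vv_pos b v2); auto.
- unfold dv. rewrite Rmax_right by lra. apply HdB; lra.
- unfold vv. rewrite Rmax_right by lra. apply HvA; lra.
- apply (hh_lower sigma b v1); auto; lra.
- apply (hh_lower sigma b v2); auto; lra.
- apply hh_diff; auto.
Qed.

Lemma It_diff t : b <= t -> Rabs (It sigma b v2 t - It sigma b v1 t) <= 4 * Dc sigma K * (A + B) / t.
Proof.
intros Ht.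
assert (L := limi_minus _ _ _ _ (It_lim sigma b K v2 Hs Hb Hvc2 Hdc2 Hvp2 Hdb2 t Ht)
                                (It_lim sigma b K v1 Hs Hb Hvc1 Hdc1 Hvp1 Hdb1 t Ht)).
apply (limi_abs_le _ _ _ t L). intros B' HB'.
pose proof (Dc_nn sigma K Hs HK).
assert (Hex1 : ex_RInt (ff sigma b v1 t) t B') by (apply ff_ex; auto; lra).
assert (Hex2 : ex_RInt (ff sigma b v2 t) t B') by (apply ff_ex; auto; lra).
destruct (ee_int t B') as [Hee Hle]; try lra.
assert (E : RInt (fun s => ff sigma b v2 t s - ff sigma b v1 t s) t B' = RInt (ff sigma b v2 t) t B' - RInt (ff sigma b v1 t) t B')
  by (apply (RInt_minus (V:=R_CompleteNormedModule)); auto).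
rewrite <- E.
eapply Rle_trans.
{ apply (RInt_abs_bound _ (fun s => Dc sigma K * (A + B) * ee s t)); try lra.
  apply (ex_RInt_minus (V:=R_NormedModule)); auto.
  apply (ex_RInt_scal (V:=R_NormedModule) (fun s => ee s t) t B' (Dc sigma K * (A + B))). auto.
  intros x Hx. apply ff_diff. lra. }
assert (HS: RInt (fun s => Dc sigma K * (A + B) * ee s t) t B' = Dc sigma K * (A + B) * RInt (fun s => ee s t) t B')
  by (apply (RInt_scal (V:=R_CompleteNormedModule)); auto).
rewrite HS. assert (0 <= Dc sigma K * (A + B)) by (apply Rmult_le_pos; lra).
apply Rle_trans with (Dc sigma K * (A + B) * (4 / t)); [apply Rmult_le_compat_l; auto | right; field; lra].
Qed.

Lemma gt_diff t : b <= t -> Rabs (gt sigma b v2 t - gt sigma b v1 t) <= 4 * Dc sigma K * (A + B) * / t ^ 3.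
Proof.
intros Ht. unfold gt. pose proof (It_diff t Ht).
replace (/ t ^ 2 * It sigma b v2 t - / t ^ 2 * It sigma b v1 t) with (/ t ^ 2 * (It sigma b v2 t - It sigma b v1 t)) by ring.
rewrite Rabs_mult. rewrite Rabs_right by (left; apply Rinv_0_lt_compat, pow_lt; lra).
assert (0 < / t ^ 2) by (apply Rinv_0_lt_compat, pow_lt; lra).
apply Rle_trans with (/ t ^ 2 * (4 * Dc sigma K * (A + B) / t)).
apply Rmult_le_compat_l; lra. right; field; lra.
Qed.

Lemma Gt_diff x : b <= x -> Rabs (Gt sigma b v2 x - Gt sigma b v1 x) <= 2 * Dc sigma K * (A + B) / x ^ 2.
Proof.
intros Hx.
assert (L := limi_minus _ _ _ _ (Gt_lim sigma b K v2 Hs Hb Hvc2 Hdc2 Hvp2 Hdb2 x Hx)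
                                (Gt_lim sigma b K v1 Hs Hb Hvc1 Hdc1 Hvp1 Hdb1 x Hx)).
apply (limi_abs_le _ _ _ x L). intros B' HB'.
pose proof (Dc_nn sigma K Hs HK).
assert (Hex1 : ex_RInt (gt sigma b v1) x B') by (apply gt_ex; auto; lra).
assert (Hex2 : ex_RInt (gt sigma b v2) x B') by (apply gt_ex; auto; lra).
destruct (cube_int x B') as [Hee Hle]; try lra.
assert (E : RInt (fun s => gt sigma b v2 s - gt sigma b v1 s) x B' = RInt (gt sigma b v2) x B' - RInt (gt sigma b v1) x B')
  by (apply (RInt_minus (V:=R_CompleteNormedModule)); auto).
rewrite <- E.
eapply Rle_trans.
{ apply (RInt_abs_bound _ (fun s => 4 * Dc sigma K * (A + B) * / s ^ 3)); try lra.
  apply (ex_RInt_minus (V:=R_NormedModule)); auto.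
  apply (ex_RInt_scal (V:=R_NormedModule) (fun s => / s ^ 3) x B' (4 * Dc sigma K * (A + B))). auto.
  intros y Hy. apply gt_diff. lra. }
assert (HS: RInt (fun s => 4 * Dc sigma K * (A + B) * / s ^ 3) x B' = 4 * Dc sigma K * (A + B) * RInt (fun s => / s ^ 3) x B')
  by (apply (RInt_scal (V:=R_CompleteNormedModule)); auto).
rewrite HS. assert (0 <= 4 * Dc sigma K * (A + B)) by (apply Rmult_le_pos; lra).
apply Rle_trans with (4 * Dc sigma K * (A + B) * / (2 * x ^ 2)); [apply Rmult_le_compat_l; auto | right; field; lra].
Qed.
End V2.


Lemma cont_bound_at (f : R -> R) b B : continuous f b -> (forall x, b < x -> Rabs (f x) <= B) -> Rabs (f b) <= B.
Proof.
intros Hc H. destruct (Rle_dec (Rabs (f b)) B) as [|Hn]; auto. exfalso.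
assert (He : 0 < Rabs (f b) - B) by lra.
destruct (Hc (ball (f b) (mkposreal _ He))) as [d Hd].
{ exists (mkposreal _ He). auto. }
set (x := b + d / 2).
assert (Hx : ball b d x).
{ unfold ball; simpl; unfold AbsRing_ball, abs, minus, plus, opp; simpl. unfold x.
  pose proof (cond_pos d). rewrite Rabs_right; lra. }
specialize (Hd x Hx). unfold ball in Hd; simpl in Hd; unfold AbsRing_ball, abs, minus, plus, opp in Hd; simpl in Hd.
specialize (H x ltac:(unfold x; pose proof (cond_pos d); lra)).
assert (Rabs (f b) <= Rabs (f x) + Rabs (f x + - f b)).
{ replace (f b) with (f x - (f x + - f b)) at 1 by ring.
  eapply Rle_trans; [apply Rabs_triang|]. rewrite Rabs_Ropp. lra. }
lra.
Qed.

Lemma Y_props n sigma b v : (2 <= n)%nat -> 0 < sigma -> 1 <= b -> Yset n sigma b v ->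
  (forall x, b <= x -> ex_derive v x) /\
  (forall x, b <= x -> continuous v x) /\
  (forall x, b <= x -> continuous (Derive v) x) /\
  (forall x, b <= x -> 0 < v x) /\
  (forall x, b <= x -> Rabs (Derive v x) <= 4 * (INR n - 1) / sigma).
Proof.
intros Hn Hs Hb [[[Hd Hdc] _] [Hp Hbd]].
assert (HN : 2 <= INR n) by (apply (le_INR 2 n) in Hn; simpl in Hn; lra).
split; [auto|]. split; [intros x Hx; apply (ex_derive_continuous (K:=R_AbsRing) (V:=R_NormedModule)); auto|].
split; [auto|]. split; [auto|].
intros x Hx. specialize (Hbd x Hx). left. eapply Rlt_le_trans; [apply Hbd|].
assert (1 <= x ^ 2) by nra.
assert (0 <= 4 * (INR n - 1)) by lra.
unfold Rdiv. apply Rmult_le_compat_l; auto.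
apply Rinv_le_contravar; nra.
Qed.

Lemma Rbar_mult_half_pinf : Rbar_mult (1/2) p_infty = p_infty.
Proof.
unfold Rbar_mult, Rbar_mult'. destruct (Rle_dec 0 (1/2)) as [H|H]; [|lra].
destruct (Rle_lt_or_eq_dec 0 (1/2) H) as [H'|H']; [auto|lra].
Qed.

Lemma Lub_not_minf (E : R -> Prop) y : E y -> Lub_Rbar E <> m_infty.
Proof.
intros Hy Heq. destruct (Lub_Rbar_correct E) as [Hub _]. specialize (Hub y Hy). rewrite Heq in Hub. simpl in Hub. auto.
Qed.

Lemma Lub_le (E : R -> Prop) c : (forall y, E y -> y <= c) -> Rbar_le (Lub_Rbar E) (Finite c).
Proof.
intros H. destruct (Lub_Rbar_correct E) as [_ Hlub]. apply Hlub. intros y Hy. simpl. auto.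
Qed.

Lemma Lub_ub (E : R -> Prop) c y : Lub_Rbar E = Finite c -> E y -> y <= c.
Proof.
intros Heq Hy. destruct (Lub_Rbar_correct E) as [Hub _]. specialize (Hub y Hy). rewrite Heq in Hub. simpl in Hub. auto.
Qed.

Lemma rhs_inf Z X Y : Rbar_plus X Y = p_infty -> Rbar_le Z (Rbar_mult (1/2) (Rbar_plus X Y)).
Proof. intros ->. rewrite Rbar_mult_half_pinf. destruct Z; simpl; auto. Qed.

Theorem proposition1 (n : nat) (sigma : R) :
  (2 <= n)%nat -> 0 < sigma ->
  exists b0 : R, forall b : R, 0 < b -> b0 <= b ->
    (forall v, Yset n sigma b v -> forall x, b < x -> ex_derive (Tsig n sigma v) x) /\
    exists tau : R, 0 < tau < 1 /\
      forall v1 v2, Yset n sigma b v1 -> Yset n sigma b v2 ->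
        Rbar_le (C1norm b (fun x => Tsig n sigma v2 x - Tsig n sigma v1 x))
                (Rbar_mult tau (C1norm b (fun x => v2 x - v1 x))).
Proof.
intros Hn Hs.
assert (HN : 2 <= INR n) by (apply (le_INR 2 n) in Hn; simpl in Hn; lra).
set (K := 4 * (INR n - 1) / sigma).
assert (HK : 0 <= K) by (unfold K; apply div_nn; lra).
set (D := Dc sigma K).
assert (HD : 0 <= D) by (apply Dc_nn; auto).
exists (Rmax 1 (32 * (INR n - 1) * D)).
intros b Hb0 Hbb.
assert (Hb : 1 <= b) by (generalize (Rmax_l 1 (32 * (INR n - 1) * D)); lra).
assert (Hb32 : 32 * (INR n - 1) * D <= b) by (generalize (Rmax_r 1 (32 * (INR n - 1) * D)); lra).
split.
{ intros v Hv x Hx. destruct (Y_props n sigma b v Hn Hs Hb Hv) as (Hd & Hvc & Hdc & Hvp & Hdb).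
  eexists. apply (Tsig_der sigma b K v Hs Hb Hvc Hdc Hvp Hdb n x Hx). }
exists (1/2). split; [lra|].
intros v1 v2 Y1 Y2.
destruct (Y_props n sigma b v1 Hn Hs Hb Y1) as (Hd1 & Hvc1 & Hdc1 & Hvp1 & Hdb1).
destruct (Y_props n sigma b v2 Hn Hs Hb Y2) as (Hd2 & Hvc2 & Hdc2 & Hvp2 & Hdb2).
fold K in Hdb1, Hdb2.
unfold C1norm at 2.
set (EA := fun y => exists x, b <= x /\ y = Rabs (v2 x - v1 x)).
set (EB := fun y => exists x, b < x /\ y = Rabs (Derive (fun x => v2 x - v1 x) x)).
assert (HEA : EA (Rabs (v2 b - v1 b))) by (exists b; split; [lra|auto]).
assert (HEB : EB (Rabs (Derive (fun x => v2 x - v1 x) (b + 1)))) by (exists (b + 1); split; [lra|auto]).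
assert (NA := Lub_not_minf EA _ HEA). assert (NB := Lub_not_minf EB _ HEB).
destruct (Lub_Rbar EA) as [A| |] eqn:EqA; [|apply rhs_inf; destruct (Lub_Rbar EB); try congruence; reflexivity | congruence].
destruct (Lub_Rbar EB) as [B| |] eqn:EqB; [| apply rhs_inf; reflexivity | congruence].
assert (HvA : forall x, b <= x -> Rabs (v2 x - v1 x) <= A).
{ intros x Hx. apply (Lub_ub EA); auto. exists x; auto. }
assert (HdB' : forall x, b < x -> Rabs (Derive v2 x - Derive v1 x) <= B).
{ intros x Hx. rewrite <- Derive_minus by (apply Hd2 || apply Hd1; lra). apply (Lub_ub EB); auto. exists x; auto. }
assert (HdB : forall x, b <= x -> Rabs (Derive v2 x - Derive v1 x) <= B).
{ intros x [Hx| <-]; [apply HdB'; auto|].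
  apply (cont_bound_at (fun x => Derive v2 x - Derive v1 x)); auto.
  apply cplus; [apply Hdc2; lra| apply copp, Hdc1; lra]. }
assert (HA : 0 <= A) by (eapply Rle_trans; [apply Rabs_pos| apply (HvA b); lra]).
assert (HB : 0 <= B) by (eapply Rle_trans; [apply Rabs_pos| apply (HdB b); lra]).
unfold C1norm.
apply Rbar_le_trans with (Rbar_plus (Finite (4 * (INR n - 1) * D * (A + B) / b)) (Finite (12 * (INR n - 1) * D * (A + B) / b))).
- apply Rbar_plus_le_compat.
  + apply Lub_le. intros y [x [Hx ->]].
    rewrite (Tsig_eq sigma b K v2 Hs Hb Hvc2 Hdc2 Hvp2 Hdb2 n x Hx).
    rewrite (Tsig_eq sigma b K v1 Hs Hb Hvc1 Hdc1 Hvp1 Hdb1 n x Hx).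
    pose proof (Gt_diff sigma b K A B v1 v2 Hs Hb HK HA HB Hvc1 Hdc1 Hvp1 Hdb1 Hvc2 Hdc2 Hvp2 Hdb2 HvA HdB x Hx) as G.
    fold D in G.
    replace (2 * (INR n - 1) * x * Gt sigma b v2 x - 2 * (INR n - 1) * x * Gt sigma b v1 x)
      with (2 * (INR n - 1) * x * (Gt sigma b v2 x - Gt sigma b v1 x)) by ring.
    rewrite Rabs_mult. rewrite (Rabs_right (2 * (INR n - 1) * x)) by nra.
    apply Rle_trans with (2 * (INR n - 1) * x * (2 * D * (A + B) / x ^ 2)).
    { apply Rmult_le_compat_l; [nra| auto]. }
    replace (2 * (INR n - 1) * x * (2 * D * (A + B) / x ^ 2)) with (4 * (INR n - 1) * D * (A + B) / x) by (field; lra).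
    assert (0 <= 4 * (INR n - 1) * D * (A + B)).
    { apply Rmult_le_pos; [|lra]. apply Rmult_le_pos; lra. }
    unfold Rdiv. apply Rmult_le_compat_l; auto. apply Rinv_le_contravar; lra.
  + apply Lub_le. intros y [x [Hx ->]].
    pose proof (Tsig_der sigma b K v2 Hs Hb Hvc2 Hdc2 Hvp2 Hdb2 n x Hx) as T2.
    pose proof (Tsig_der sigma b K v1 Hs Hb Hvc1 Hdc1 Hvp1 Hdb1 n x Hx) as T1.
    assert (E2 : ex_derive (Tsig n sigma v2) x) by (eexists; exact T2).
    assert (E1 : ex_derive (Tsig n sigma v1) x) by (eexists; exact T1).
    pose proof (Derive_minus (Tsig n sigma v2) (Tsig n sigma v1) x E2 E1) as HDm.
    pose proof (is_derive_unique _ _ _ T2) as U2. pose proof (is_derive_unique _ _ _ T1) as U1.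
    rewrite HDm. rewrite U2, U1.
    pose proof (Gt_diff sigma b K A B v1 v2 Hs Hb HK HA HB Hvc1 Hdc1 Hvp1 Hdb1 Hvc2 Hdc2 Hvp2 Hdb2 HvA HdB x ltac:(lra)) as G.
    pose proof (gt_diff sigma b K A B v1 v2 Hs Hb HK HA HB Hvc1 Hdc1 Hvp1 Hdb1 Hvc2 Hdc2 Hvp2 Hdb2 HvA HdB x ltac:(lra)) as g.
    fold D in G, g.
    set (dG := Gt sigma b v2 x - Gt sigma b v1 x) in *.
    set (dg := gt sigma b v2 x - gt sigma b v1 x) in *.
    replace (2 * (INR n - 1) * (Gt sigma b v2 x - x * gt sigma b v2 x) -
             2 * (INR n - 1) * (Gt sigma b v1 x - x * gt sigma b v1 x))
      with (2 * (INR n - 1) * (dG - x * dg)) by (unfold dG, dg; ring).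
    rewrite Rabs_mult. rewrite (Rabs_right (2 * (INR n - 1))) by lra.
    assert (Hxg : Rabs (x * dg) <= 4 * D * (A + B) / x ^ 2).
    { rewrite Rabs_mult, Rabs_right by lra.
      apply Rle_trans with (x * (4 * D * (A + B) * / x ^ 3)).
      apply Rmult_le_compat_l; lra. right; field; lra. }
    assert (Rabs (dG - x * dg) <= 6 * D * (A + B) / x ^ 2).
    { eapply Rle_trans; [apply Rabs_triang|]. rewrite Rabs_Ropp.
      replace (6 * D * (A + B) / x ^ 2) with (2 * D * (A + B) / x ^ 2 + 4 * D * (A + B) / x ^ 2) by (field; lra).
      lra. }
    apply Rle_trans with (2 * (INR n - 1) * (6 * D * (A + B) / x ^ 2)).
    { apply Rmult_le_compat_l; [lra| auto]. }
    assert (0 <= 12 * (INR n - 1) * D * (A + B)).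
    { apply Rmult_le_pos; [|lra]. apply Rmult_le_pos; lra. }
    replace (2 * (INR n - 1) * (6 * D * (A + B) / x ^ 2)) with (12 * (INR n - 1) * D * (A + B) / x ^ 2) by (field; lra).
    assert (Hx2 : x * 1 <= x * x) by (apply Rmult_le_compat_l; lra).
    assert (Hb2 : b <= x ^ 2) by (simpl; lra).
    unfold Rdiv. apply Rmult_le_compat_l; auto. apply Rinv_le_contravar; lra.
- simpl. 
  assert (0 <= (INR n - 1) * D * (A + B)) by (apply Rmult_le_pos; [apply Rmult_le_pos|]; lra).
  assert (16 * (INR n - 1) * D * (A + B) / b <= 1 / 2 * (A + B)).
  { apply (Rmult_le_reg_r b); [lra|]. replace (16 * (INR n - 1) * D * (A + B) / b * b) with (16 * (INR n - 1) * D * (A + B)) by (field; lra).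
    nra. }
  replace (4 * (INR n - 1) * D * (A + B) / b + 12 * (INR n - 1) * D * (A + B) / b)
    with (16 * (INR n - 1) * D * (A + B) / b) by (field; lra).
  auto.
Qed.
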